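(* Suppose $F$ satisfies Assumption A1, $F\in MDA(\Lambda)$, Assumption A3, and $x_F=\infty$. For a threshold $a$ set $\beta=\bar F(a)$, $\eta=f(a)$, $\nu=-f'(a)$. Fix $x$ with $1/2<x\le1$ and let $p=p(a)$ satisfy $1-p=x\beta$. Let $q=F^{-1}(p)$ be the true $p$-quantile and $q^*$ the optimal value of $$\sup_{q'\ge a,\,g}\ q'\ \text{ s.t. }(1-\beta)+\int_a^{q'}g=p,\ \int_a^\infty g=\beta,\ g(a)=g(a+)=\eta,\ g'_+(a)\ge-\nu,\ g\text{ convex and }\ge0\text{ on }[a,\infty).$$ Then $\lim_{a\to\infty}q^*/q=1$.
   Context: $X$ is a continuous random variable with distribution function $F$, density $f$, $\bar F=1-F$, right endpoint $x_F=\sup\{x:F(x)<1\}$. $\Lambda(x)=\exp\{-e^{-x}\}$. $F\in MDA(\Lambda)$ means there exist $c_n>0$, $d_n$ with $c_n^{-1}(M_n-d_n)$ converging in distribution to $\Lambda$, $M_n$ the maximum of $n$ i.i.d. copies of $X$. Assumption A1: there exists $z<x_F$ such that on $(z,x_F)$, $F$ is twice differentiable and $f$ is positive, decreasing and convex. Assumption A3: $\lim_{x\uparrow x_F}\bar F(x)f'(x)/f(x)^2=-1$. $g(a+)$ is the right limit and $g'_+$ the right derivative. *)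

(* Defs.v *)
From Stdlib Require Import Reals.
From Coquelicot Require Import Coquelicot.
Open Scope R_scope.

Definition Lambda (x : R) : R := exp (- exp (- x)).

Definition is_continuous_cdf (F : R -> R) : Prop :=
  (forall x y, x <= y -> F x <= F y) /\
  (forall x, continuous F x) /\
  filterlim F (Rbar_locally m_infty) (locally 0) /\
  filterlim F (Rbar_locally p_infty) (locally 1).

Definition right_endpoint_infinite (F : R -> R) : Prop := forall x, F x < 1.

Definition assumption_A1 (F f fd : R -> R) : Prop :=
  exists z : R,
    (forall x, z < x -> is_derive F x (f x)) /\
    (forall x, z < x -> is_derive f x (fd x)) /\
    (forall x, z < x -> 0 < f x) /\
    (forall x y, z < x -> x <= y -> f y <= f x) /\
    (forall x y t, z < x -> z < y -> 0 <= t <= 1 ->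
        f (t * x + (1 - t) * y) <= t * f x + (1 - t) * f y).

(* F in MDA(Lambda): c_n^{-1}(M_n - d_n) converges in distribution to Lambda,
   i.e. F(c_n x + d_n)^n -> Lambda(x) for every x (Lambda is continuous). *)
Definition in_MDA_Gumbel (F : R -> R) : Prop :=
  exists c d : nat -> R, (forall n, 0 < c n) /\
    forall x, is_lim_seq (fun n => (F (c n * x + d n)) ^ n) (Lambda x).

Definition assumption_A3 (F f fd : R -> R) : Prop :=
  is_lim (fun x => (1 - F x) * fd x / (f x ^ 2)) p_infty (-1).

Definition quantile (F : R -> R) (p : R) : R :=
  real (Glb_Rbar (fun y => p <= F y)).

Definition convex_on_from (g : R -> R) (a : R) : Prop :=
  forall u v t, a <= u -> a <= v -> 0 <= t <= 1 ->
    g (t * u + (1 - t) * v) <= t * g u + (1 - t) * g v.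

Definition feasible (a beta eta nu p q' : R) : Prop :=
  a <= q' /\
  exists g : R -> R,
    is_RInt g a q' (p - (1 - beta)) /\
    is_RInt_gen g (at_point a) (Rbar_locally p_infty) beta /\
    g a = eta /\
    filterlim g (at_right a) (locally eta) /\
    (exists L : Rbar,
        filterlim (fun h => (g (a + h) - g a) / h) (at_right 0) (Rbar_locally L) /\
        Rbar_le (Finite (- nu)) L) /\
    convex_on_from g a /\
    (forall y, a <= y -> 0 <= g y).

(* optimal value q* (in the extended reals; sup of empty set is -oo) *)
Definition qstar (a beta eta nu p : R) : Rbar :=
  Lub_Rbar (feasible a beta eta nu p).

(* Main.v *)
Require Import Defs.
From Stdlib Require Import Reals Lra.
From Coquelicot Require Import Coquelicot.
Open Scope R_scope.

Lemma conv_quot g a h t : convex_on_from g a -> 0 < h -> h <= t - a ->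
  (g (a + h) - g a) / h <= (g t - g a) / (t - a).
Proof.
  intros Hc Hh Ht.
  set (l := h / (t - a)).
  assert (Htl : 0 < t - a) by lra.
  assert (Hl0 : 0 <= l <= 1).
  { unfold l; split. apply Rlt_le, Rdiv_lt_0_compat; lra.
    apply Rmult_le_reg_r with (t - a); auto. unfold Rdiv; rewrite Rmult_assoc, Rinv_l; lra. }
  assert (Ee : l * t + (1 - l) * a = a + h).
  { unfold l; field; lra. }
  assert (H := Hc t a l ltac:(lra) ltac:(lra) Hl0). rewrite Ee in H.
  assert (H2 : g (a + h) - g a <= l * (g t - g a)) by lra.
  unfold l in H2.
  apply Rmult_le_reg_r with h; auto.
  replace ((g (a + h) - g a) / h * h) with (g (a + h) - g a) by (field; lra).
  replace ((g t - g a) / (t - a) * h) with (h / (t - a) * (g t - g a)) by (field; lra).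
  exact H2.
Qed.

Lemma conv_tangent g a L : convex_on_from g a ->
  filterlim (fun h => (g (a + h) - g a) / h) (at_right 0) (Rbar_locally L) ->
  forall t, a < t -> Rbar_le L ((g t - g a) / (t - a)).
Proof.
  intros Hc Hl t Ht.
  destruct (Rbar_le_lt_dec L ((g t - g a) / (t - a))) as [H|H]; auto.
  exfalso.
  assert (HN := Hl _ (open_Rbar_gt' _ _ H)).
  simpl in HN. unfold filtermap, at_right, within in HN.
  destruct HN as [eps Heps].
  set (h := Rmin (eps / 2) (t - a)).
  assert (Hh0 : 0 < h) by (unfold h; apply Rmin_pos; [destruct eps; simpl; lra | lra]).
  assert (Hh1 : h <= t - a) by apply Rmin_r.
  assert (Hh2 : h <= eps / 2) by apply Rmin_l.
  assert (Hb : ball 0 eps h).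
  { unfold ball; simpl; unfold AbsRing_ball; simpl. unfold abs, minus, plus, opp; simpl.
    rewrite Ropp_0, Rplus_0_r, Rabs_right by lra. destruct eps; simpl in *; lra. }
  specialize (Heps h Hb Hh0). simpl in Heps.
  assert (Hq := conv_quot g a h t Hc Hh0 Hh1). lra.
Qed.

Lemma deriv_right f a l : is_derive f a l ->
  filterlim (fun h => (f (a + h) - f a) / h) (at_right 0) (locally l).
Proof.
  intros H. apply is_derive_Reals in H.
  apply filterlim_locally. intros eps.
  destruct (H eps (cond_pos eps)) as [d Hd].
  exists d. intros y Hy Hy0.
  unfold ball in Hy; simpl in Hy; unfold AbsRing_ball, abs, minus, plus, opp in Hy; simpl in Hy.
  rewrite Ropp_0, Rplus_0_r in Hy.
  unfold ball; simpl; unfold AbsRing_ball, abs, minus, plus, opp; simpl.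
  apply Hd; auto. lra.
Qed.

Lemma lower_line g a nu L : convex_on_from g a ->
  filterlim (fun h => (g (a + h) - g a) / h) (at_right 0) (Rbar_locally L) ->
  Rbar_le (Finite (- nu)) L -> forall t, a <= t -> g a - nu * (t - a) <= g t.
Proof.
  intros Hc Hl HL t Ht.
  destruct (Req_dec t a) as [->|Hne]. lra.
  assert (Ht' : a < t) by lra.
  assert (H := Rbar_le_trans _ _ _ HL (conv_tangent g a L Hc Hl t Ht')).
  simpl in H.
  assert (H2 : - nu * (t - a) <= (g t - g a) / (t - a) * (t - a)) by (apply Rmult_le_compat_r; lra).
  replace ((g t - g a) / (t - a) * (t - a)) with (g t - g a) in H2 by (field; lra).
  lra.
Qed.

Lemma line_int a eta nu c : is_RInt (fun t => eta - nu * (t - a)) a c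
   (eta * (c - a) - nu * (c - a) ^ 2 / 2).
Proof.
  assert (H := is_RInt_derive (fun t => eta * (t - a) - nu * (t - a) ^ 2 / 2)
     (fun t => eta - nu * (t - a)) a c).
  replace (eta * (c - a) - nu * (c - a) ^ 2 / 2) with
    (minus ((fun t => eta * (t - a) - nu * (t - a) ^ 2 / 2) c)
           ((fun t => eta * (t - a) - nu * (t - a) ^ 2 / 2) a)).
  2:{ unfold minus, plus, opp; simpl. field. }
  apply H.
  - intros y _. auto_derive; auto. field.
  - intros y _. apply (@ex_derive_continuous R_AbsRing R_NormedModule (fun t => eta - nu * (t - a))). auto_derive; auto.
Qed.

Lemma feas_bound a beta eta nu p q' : 0 < eta -> 0 < nu ->
  2 * (p - (1 - beta)) * nu < eta ^ 2 ->
  feasible a beta eta nu p q' -> q' - a <= 2 * (p - (1 - beta)) / eta.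
Proof.
  intros He Hn Hb [Hq [g [HI [_ [Ha [_ [[L [HL1 HL2]] [Hc Hpos]]]]]]]].
  set (V := p - (1 - beta)) in *.
  assert (Hline := lower_line g a nu L Hc HL1 HL2).
  rewrite Ha in Hline.
  assert (Hex : ex_RInt g a q') by (eexists; eauto).
  assert (key : forall c, a <= c <= q' -> eta * (c - a) - nu * (c - a) ^ 2 / 2 <= V).
  { intros c Hcc.
    assert (E1 : ex_RInt g a c) by (apply (ex_RInt_Chasles_1 g a c q'); [lra|auto]).
    assert (E2 : ex_RInt g c q') by (apply (ex_RInt_Chasles_2 g a c q'); [lra|auto]).
    assert (Hs := RInt_Chasles g a c q' E1 E2).
    rewrite (is_RInt_unique _ _ _ _ HI) in Hs.
    assert (R1 : 0 <= RInt g c q') by (apply RInt_ge_0; [lra | auto | intros; apply Hpos; lra]).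
    assert (R2 : RInt (fun t => eta - nu * (t - a)) a c <= RInt g a c).
    { apply RInt_le; [lra| eexists; apply line_int | auto |].
      intros; apply Hline; lra. }
    rewrite (is_RInt_unique _ _ _ _ (line_int a eta nu c)) in R2.
    unfold plus in Hs; simpl in Hs. lra. }
  destruct (Rle_dec (q' - a) (eta / nu)) as [Hs|Hs].
  - assert (K := key q' ltac:(lra)).
    assert (nu * (q' - a) <= eta).
    { apply Rmult_le_compat_l with (r := nu) in Hs; [|lra].
      replace (nu * (eta / nu)) with eta in Hs by (field; lra). lra. }
    assert (eta * (q' - a) / 2 <= V) by nra.
    apply Rmult_le_reg_r with eta; auto.
    replace (2 * V / eta * eta) with (2 * V) by (field; lra). lra.
  - exfalso.
    assert (Hen : 0 < eta / nu) by (apply Rdiv_lt_0_compat; lra).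
    assert (K := key (a + eta / nu) ltac:(lra)).
    replace (eta * (a + eta / nu - a) - nu * (a + eta / nu - a) ^ 2 / 2)
      with (eta ^ 2 / (2 * nu)) in K by (field; lra).
    apply Rmult_le_compat_r with (r := 2 * nu) in K; [|lra].
    replace (eta ^ 2 / (2 * nu) * (2 * nu)) with (eta ^ 2) in K by (field; lra).
    lra.
Qed.

Lemma cont_of_der f x l : is_derive f x l -> continuity_pt f x.
Proof.
  intros H. apply continuity_pt_filterlim.
  apply (@ex_derive_continuous R_AbsRing R_NormedModule f). eexists; eauto.
Qed.

Lemma u_deriv (F f fd : R -> R) y : is_derive F y (f y) -> is_derive f y (fd y) -> 0 < f y ->
  is_derive (fun t => (1 - F t) / f t) y (-1 - (1 - F y) * fd y / (f y ^ 2)).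
Proof.
  intros HF Hf Hp.
  assert (H1 : is_derive (fun t => 1 - F t) y (0 - f y)).
  { replace (0 - f y) with (minus 0 (f y)) by (unfold minus, plus, opp; simpl; ring).
    apply (@is_derive_minus R_AbsRing R_NormedModule (fun _ => 1) F); [|auto].
    exact (@is_derive_const R_AbsRing R_NormedModule 1 y). }
  assert (H2 := is_derive_div _ _ _ _ _ H1 Hf ltac:(lra)).
  replace (-1 - (1 - F y) * fd y / (f y ^ 2)) with
    (((0 - f y) * f y - (1 - F y) * fd y) / f y ^ 2) by (field; lra).
  exact H2.
Qed.

Lemma u_small (F f fd : R -> R) (z : R) :
  (forall y, z < y -> is_derive F y (f y)) ->
  (forall y, z < y -> is_derive f y (fd y)) ->
  (forall y, z < y -> 0 < f y) ->
  assumption_A3 F f fd ->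
  forall eps, 0 < eps -> exists M, forall y, M < y -> (1 - F y) / f y <= eps * y.
Proof.
  intros HF Hf Hp HA eps Heps.
  apply is_lim_spec in HA. simpl in HA.
  destruct (HA (mkposreal (eps / 2) ltac:(lra))) as [M1 HM1]. simpl in HM1.
  set (u := fun t => (1 - F t) / f t).
  set (a0 := Rmax (Rmax M1 z) 0 + 1).
  assert (Ha0 : M1 < a0 /\ z < a0 /\ 0 < a0).
  { unfold a0. assert (H1 := Rmax_l (Rmax M1 z) 0). assert (H2 := Rmax_r (Rmax M1 z) 0).
    assert (H3 := Rmax_l M1 z). assert (H4 := Rmax_r M1 z). lra. }
  exists (Rmax a0 (2 * Rabs (u a0) / eps)).
  intros y Hy.
  assert (Hy1 := Rle_lt_trans _ _ _ (Rmax_l _ _) Hy).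
  assert (Hy2 := Rle_lt_trans _ _ _ (Rmax_r _ _) Hy).
  destruct (MVT_gen u a0 y (fun t => -1 - (1 - F t) * fd t / (f t ^ 2))) as [c [Hc Hmvt]].
  - intros t Ht. rewrite Rmin_left, Rmax_right in Ht by lra.
    apply u_deriv; [apply HF|apply Hf|apply Hp]; lra.
  - intros t Ht. rewrite Rmin_left, Rmax_right in Ht by lra.
    eapply cont_of_der. apply u_deriv; [apply HF|apply Hf|apply Hp]; lra.
  - rewrite Rmin_left, Rmax_right in Hc by lra.
    assert (Hw := HM1 c ltac:(lra)).
    apply Rabs_lt_between in Hw.
    assert (Hd : -1 - (1 - F c) * fd c / f c ^ 2 <= eps / 2) by (replace (f c ^ 2) with (f c * (f c * 1)) by ring; lra).
    assert (Hu : u y - u a0 <= eps / 2 * (y - a0)).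
    { rewrite Hmvt. apply Rmult_le_compat_r; lra. }
    assert (Hab : u a0 <= Rabs (u a0)) by apply Rle_abs.
    assert (Hk : 2 * Rabs (u a0) / eps * eps = 2 * Rabs (u a0)) by (field; lra).
    assert (2 * Rabs (u a0) <= y * eps).
    { rewrite <- Hk. apply Rmult_le_compat_r; lra. }
    change ((1 - F y) / f y) with (u y).
    assert (0 <= eps / 2 * a0) by (apply Rmult_le_pos; lra). lra.
Qed.

Lemma f_feasible (F f fd : R -> R) z a q0 :
  is_continuous_cdf F -> (forall y, 0 <= f y) ->
  (forall y, z < y -> is_derive F y (f y)) ->
  (forall y, z < y -> is_derive f y (fd y)) ->
  (forall x y t, z < x -> z < y -> 0 <= t <= 1 ->
        f (t * x + (1 - t) * y) <= t * f x + (1 - t) * f y) ->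
  z < a -> a <= q0 ->
  feasible a (1 - F a) (f a) (- fd a) (F q0) q0.
Proof.
  intros [_ [_ [_ HF1]]] Hf0 HdF Hdf Hfc Hz Hq.
  split; [exact Hq|]. exists f.
  assert (Hcf : forall y, z < y -> continuous f y).
  { intros y Hy. apply (@ex_derive_continuous R_AbsRing R_NormedModule f).
    eexists; apply Hdf; auto. }
  split.
  { replace (F q0 - (1 - (1 - F a))) with (minus (F q0) (F a))
      by (unfold minus, plus, opp; simpl; ring).
    apply (@is_RInt_derive R_CompleteNormedModule F f); intros y Hy; rewrite Rmin_left, Rmax_right in Hy by lra.
    - apply HdF; lra.
    - apply Hcf; lra. }
  split.
  { assert (Hprod : forall P : R -> Prop, (forall y, z < y -> P y) ->
       filter_prod (at_point a) (Rbar_locally p_infty)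
         (fun ab : R * R => forall y, Rmin (fst ab) (snd ab) <= y <= Rmax (fst ab) (snd ab) -> P y)).
    { intros P HP. apply Filter_prod with (fun x => z < x) (fun x => z < x).
      - exact Hz.
      - exists z. auto.
      - intros u v Hu Hv y Hy; simpl in Hy. apply HP.
        destruct (Rle_dec u v). rewrite Rmin_left in Hy by lra. lra.
        rewrite Rmin_right in Hy by lra. lra. }
    assert (H := is_RInt_gen_Derive (Fa := at_point a) (Fb := Rbar_locally p_infty) F (F a) 1).
    replace (1 - F a) with (1 - F a) by reflexivity.
    eapply is_RInt_gen_ext.
    2:{ apply H.
      - apply Hprod. intros y Hy. eexists. apply HdF; auto.
      - apply Hprod. intros y Hy.
        apply continuous_ext_loc with f; [|apply Hcf; auto].
        assert (Hp : 0 < y - z) by lra.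
        exists (mkposreal _ Hp). intros w Hw. simpl in Hw.
        unfold ball in Hw; simpl in Hw; unfold AbsRing_ball, abs, minus, plus, opp in Hw; simpl in Hw.
        apply Rabs_lt_between in Hw.
        symmetry. apply is_derive_unique. apply HdF. lra.
      - intros P HP. unfold filtermap, at_point. apply locally_singleton in HP. exact HP.
      - exact HF1. }
    apply Filter_prod with (fun x => z < x) (fun x => z < x).
    - exact Hz.
    - exists z. auto.
    - intros u v Hu Hv y Hy; simpl in Hy.
      apply is_derive_unique. apply HdF.
      destruct (Rle_dec u v). rewrite Rmin_left in Hy by lra. lra.
      rewrite Rmin_right in Hy by lra. lra. }
  split; [reflexivity|].
  split.
  { apply (filterlim_filter_le_1 (F := locally a)).
    - apply filter_le_within.
    - apply Hcf; auto. }
  split.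
  { exists (Finite (fd a)). split.
    - apply deriv_right. apply Hdf; auto.
    - simpl. lra. }
  split.
  { intros u v t Hu Hv Ht. apply Hfc; lra. }
  intros y _; apply Hf0.
Qed.

Lemma F_lower (F f fd : R -> R) z a d :
  (forall y, z < y -> is_derive F y (f y)) ->
  (forall y, z < y -> is_derive f y (fd y)) ->
  (forall x y t, z < x -> z < y -> 0 <= t <= 1 ->
        f (t * x + (1 - t) * y) <= t * f x + (1 - t) * f y) ->
  z < a -> 0 <= d ->
  F a + f a * d + fd a * d ^ 2 / 2 <= F (a + d).
Proof.
  intros HdF Hdf Hfc Hz Hd.
  destruct (Req_dec d 0) as [->|Hd0].
  { replace (a + 0) with a by ring. simpl; lra. }
  set (G := fun t => F t - (f a * (t - a) + fd a * (t - a) ^ 2 / 2)).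
  assert (HG : forall t, z < t -> is_derive G t (f t - (f a + fd a * (t - a)))).
  { intros t Ht. unfold G.
    assert (H1 : is_derive (fun t => f a * (t - a) + fd a * (t - a) ^ 2 / 2) t (f a + fd a * (t - a))).
    { auto_derive; auto. field. }
    apply (@is_derive_minus R_AbsRing R_NormedModule F _ t (f t) _ (HdF t Ht) H1). }
  destruct (MVT_gen G a (a + d) (fun t => f t - (f a + fd a * (t - a)))) as [c [Hc Hm]].
  - intros t Ht. rewrite Rmin_left, Rmax_right in Ht by lra. apply HG; lra.
  - intros t Ht. rewrite Rmin_left, Rmax_right in Ht by lra. eapply cont_of_der. apply HG; lra.
  - rewrite Rmin_left, Rmax_right in Hc by lra.
    assert (Hl := lower_line f a (- fd a) (Finite (fd a))
      ltac:(intros u v t Hu Hv Ht; apply Hfc; lra)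
      (deriv_right f a (fd a) (Hdf a Hz)) ltac:(simpl; lra) c ltac:(lra)).
    assert (0 <= f c - (f a + fd a * (c - a))) by lra.
    assert (0 <= G (a + d) - G a).
    { rewrite Hm. apply Rmult_le_pos; lra. }
    unfold G in *. replace (a + d - a) with d in * by ring.
    replace (a - a) with 0 in * by ring. simpl in *. lra.
Qed.

Lemma F_strict (F f : R -> R) z w a :
  (forall y, z < y -> is_derive F y (f y)) ->
  (forall y, z < y -> 0 < f y) -> z < w -> w < a -> F w < F a.
Proof.
  intros HdF Hp Hz Hw.
  destruct (MVT_gen F w a f) as [c [Hc Hm]].
  - intros t Ht. rewrite Rmin_left, Rmax_right in Ht by lra. apply HdF; lra.
  - intros t Ht. rewrite Rmin_left, Rmax_right in Ht by lra. eapply cont_of_der. apply HdF; lra.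
  - rewrite Rmin_left, Rmax_right in Hc by lra.
    assert (0 < f c) by (apply Hp; lra).
    assert (0 < f c * (a - w)) by (apply Rmult_lt_0_compat; lra). lra.
Qed.

Theorem theorem8 (F f fd : R -> R) (x : R) :
  is_continuous_cdf F ->
  (forall y, 0 <= f y) ->
  assumption_A1 F f fd ->
  in_MDA_Gumbel F ->
  assumption_A3 F f fd ->
  right_endpoint_infinite F ->
  1 / 2 < x <= 1 ->
  forall eps : R, 0 < eps ->
  exists M : R, forall a : R, M < a ->
    let beta := 1 - F a in
    let eta := f a in
    let nu := - fd a in
    let p := 1 - x * beta in
    let q := quantile F p in
    exists r : R, qstar a beta eta nu p = Finite r /\
      Rabs (r / q - 1) < eps.
Proof.
  intros HF Hf0 [z [HdF [Hdf [Hfp [Hfd Hfc]]]]] _ HA3 Hend Hx eps Heps.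
  set (d0 := x - 1 / 2).
  assert (Hd0 : 0 < d0) by (unfold d0; lra).
  assert (HA := HA3). apply is_lim_spec in HA. simpl in HA.
  destruct (HA (mkposreal d0 Hd0)) as [M2 HM2]. simpl in HM2.
  destruct (u_small F f fd z HdF Hdf Hfp HA3 (eps / 2) ltac:(lra)) as [M3 HM3].
  exists (Rmax (Rmax z M2) (Rmax M3 0)).
  intros a Ha.
  assert (Hz : z < a /\ M2 < a /\ M3 < a /\ 0 < a).
  { assert (H1 := Rmax_l (Rmax z M2) (Rmax M3 0)). assert (H2 := Rmax_r (Rmax z M2) (Rmax M3 0)).
    assert (H3 := Rmax_l z M2). assert (H4 := Rmax_r z M2).
    assert (H5 := Rmax_l M3 0). assert (H6 := Rmax_r M3 0). lra. }
  destruct Hz as [Hz [HM2a [HM3a Ha0]]].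
  cbv zeta.
  set (beta := 1 - F a). set (eta := f a). set (nu := - fd a).
  set (p := 1 - x * beta).
  assert (Hb : 0 < beta) by (unfold beta; specialize (Hend a); lra).
  assert (He : 0 < eta) by (apply Hfp; auto).
  set (w := (1 - F a) * fd a / f a ^ 2).
  assert (Hw : - d0 < w + 1 < d0).
  { assert (H := HM2 a HM2a). apply Rabs_lt_between in H.
    unfold w. replace (f a ^ 2) with (f a * (f a * 1)) by ring. lra. }
  assert (Hwid : beta * fd a = w * eta ^ 2).
  { unfold w, beta, eta. field. unfold eta in He. lra. }
  assert (Hnu : 0 < nu).
  { unfold nu. assert (w * eta ^ 2 < 0).
    { assert (0 < eta ^ 2) by (apply pow_lt; lra).
      assert (d0 <= 1/2) by (unfold d0; lra).
      assert (w < 0) by lra.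
      assert (0 < (- w) * eta ^ 2) by (apply Rmult_lt_0_compat; lra). lra. }
    assert (beta * fd a < 0) by lra.
    destruct (Rlt_or_le (fd a) 0); [lra|].
    assert (0 <= beta * fd a) by (apply Rmult_le_pos; lra). lra. }
  set (u := beta / eta).
  assert (Hu : u <= eps / 2 * a) by (apply HM3; auto).
  assert (Hu0 : 0 < u) by (apply Rdiv_lt_0_compat; auto).
  assert (Hue : u * eta = beta) by (unfold u; field; lra).
  assert (HFb : p <= F (a + u)).
  { assert (H := F_lower F f fd z a u HdF Hdf Hfc Hz ltac:(lra)).
    fold eta in H.
    assert (E : fd a * u ^ 2 / 2 = w * beta / 2).
    { unfold u. replace (fd a * (beta / eta) ^ 2 / 2) with (beta * fd a * beta / (2 * eta ^ 2)) by (field; lra).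
      rewrite Hwid. field. lra. }
    rewrite E in H. unfold p. unfold beta in *.
    assert (w * (1 - F a) >= (-1 - d0) * (1 - F a)) by (apply Rmult_ge_compat_r; lra).
    unfold d0 in *. assert (0 <= (x - 1/2) * (1 - F a)) by (apply Rmult_le_pos; lra). rewrite (Rmult_comm eta u), Hue in H. lra. }
  assert (HFa : F a <= p).
  { unfold p, beta. assert (x * (1 - F a) <= 1 * (1 - F a)) by (apply Rmult_le_compat_r; unfold beta in Hb; lra). lra. }
  destruct HF as [Hmono [Hcont [HFm HF1]]].
  assert (Hcontp : continuity F).
  { intros t. apply continuity_pt_filterlim. apply Hcont. }
  destruct (IVT_gen F a (a + u) p Hcontp) as [q0 [Hq0 Hq0p]].
  { rewrite Rmin_left, Rmax_right; [lra | apply Hmono; lra | apply Hmono; lra]. }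
  rewrite Rmin_left, Rmax_right in Hq0 by lra.
  assert (Hfeas : feasible a beta eta nu p q0).
  { rewrite <- Hq0p. unfold beta, eta, nu.
    apply (f_feasible F f fd z a q0); auto. split; auto. lra. }
  assert (Hup : forall q', feasible a beta eta nu p q' -> q' <= a + u).
  { intros q' Hq'.
    assert (HV : p - (1 - beta) = (1 - x) * beta) by (unfold p; ring).
    assert (Hcond : 2 * (p - (1 - beta)) * nu < eta ^ 2).
    { rewrite HV. unfold nu.
      replace (2 * ((1 - x) * beta) * - fd a) with (- (2 * (1 - x)) * (beta * fd a)) by ring.
      rewrite Hwid.
      assert (Hk : 2 * (1 - x) * (- w) < 1).
      { assert (- w < 1 + d0) by lra. assert (0 <= 2 * (1 - x)) by lra.
        assert (2 * (1 - x) * (- w) <= 2 * (1 - x) * (1 + d0)) by (apply Rmult_le_compat_l; lra).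
        assert (E2 : 2 * (1 - x) * (1 + d0) = 1 - d0 - 2 * (d0 * d0)) by (unfold d0; field).
        assert (0 <= d0 * d0) by nra. lra. }
      assert (0 < eta ^ 2) by (apply pow_lt; lra). nra. }
    assert (H := feas_bound a beta eta nu p q' He Hnu Hcond Hq').
    rewrite HV in H.
    assert (2 * ((1 - x) * beta) / eta <= u).
    { replace (2 * ((1 - x) * beta) / eta) with ((2 * (1 - x)) * u) by (unfold u; field; lra).
      rewrite <- (Rmult_1_l u) at 2. apply Rmult_le_compat_r; lra. }
    lra. }
  destruct (Lub_Rbar_correct (feasible a beta eta nu p)) as [Hub Hleast].
  assert (Hl1 := Hub q0 Hfeas).
  assert (Hl2 := Hleast (Finite (a + u)) (fun y Hy => Hup y Hy)).
  unfold qstar.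
  destruct (Lub_Rbar (feasible a beta eta nu p)) as [r| |] eqn:Er; simpl in Hl1, Hl2; try tauto.
  exists r. split; [reflexivity|].
  unfold quantile.
  destruct (Glb_Rbar_correct (fun y => p <= F y)) as [Hlb Hgl].
  assert (Hg1 := Hlb (a + u) HFb).
  assert (Hg2 : Rbar_le a (Glb_Rbar (fun y => p <= F y))).
  { apply Hgl. intros y Hy. simpl.
    destruct (Rlt_or_le y a) as [Hya|]; [|auto]. exfalso.
    set (w' := (Rmax y z + a) / 2).
    assert (H1 := Rmax_l y z). assert (H2 := Rmax_r y z).
    assert (Rmax y z < a) by (apply Rmax_lub_lt; lra).
    assert (F y <= F w') by (apply Hmono; unfold w'; lra).
    assert (F w' < F a) by (apply (F_strict F f z); auto; unfold w'; lra).
    lra. }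
  destruct (Glb_Rbar (fun y => p <= F y)) as [q| |]; simpl in Hg1, Hg2; try tauto.
  simpl.
  assert (Hq : 0 < q) by lra.
  assert (Hrq : Rabs (r - q) <= eps / 2 * q).
  { apply Rabs_le. assert (eps / 2 * a <= eps / 2 * q) by (apply Rmult_le_compat_l; lra). assert (0 <= eps / 2 * q) by (apply Rmult_le_pos; lra). lra. }
  replace (r / q - 1) with ((r - q) / q) by (field; lra).
  unfold Rdiv. rewrite Rabs_mult, Rabs_inv, (Rabs_right q) by lra.
  apply Rmult_lt_reg_r with q; auto.
  rewrite Rmult_assoc, Rinv_l by lra. assert (0 < eps * q) by (apply Rmult_lt_0_compat; lra). lra.
Qed.
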